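(* Let $Z$ be an $n\times n$ positive definite complex matrix with largest eigenvalue $a$ and smallest eigenvalue $b$, and let $E$ be any orthogonal projection ($E=E^*=E^2$). Then $$EZE \le \frac{(a+b)^2}{4ab}\, Z.$$
   Context: $\le$ denotes the Loewner order on Hermitian matrices. *)

(* Defs.v *)
(* Complex numbers: an arbitrary numClosedFieldType C
   (e.g. the complex numbers R[i] over a real closed field, or algC). *)
From HB Require Import structures.
From mathcomp Require Import all_boot all_order all_algebra.
Set Implicit Arguments. Unset Strict Implicit. Unset Printing Implicit Defensive.
Import Order.TTheory GRing.Theory Num.Theory.
Local Open Scope ring_scope.
Local Open Scope sesquilinear_scope.

Section Defs.
Variable C : numClosedFieldType.

Definition adjmx n (A : 'M[C]_n) : 'M[C]_n := A ^t*.

Definition hermitianmx n (A : 'M[C]_n) : Prop := adjmx A = A.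

Definition qform n (A : 'M[C]_n) (v : 'rV[C]_n) : C := (v *m A *m v ^t*) 0 0.

Definition psdmx n (A : 'M[C]_n) : Prop :=
  hermitianmx A /\ forall v : 'rV[C]_n, 0 <= qform A v.

Definition pdmx n (A : 'M[C]_n) : Prop :=
  hermitianmx A /\ forall v : 'rV[C]_n, v != 0 -> 0 < qform A v.

Definition loewner_le n (A B : 'M[C]_n) : Prop := psdmx (B - A).

Definition orth_projmx n (E : 'M[C]_n) : Prop := adjmx E = E /\ E *m E = E.

Definition largest_eigenvalue n (A : 'M[C]_n) (a : C) : Prop :=
  eigenvalue A a /\ forall c, eigenvalue A c -> c <= a.
Definition smallest_eigenvalue n (A : 'M[C]_n) (b : C) : Prop :=
  eigenvalue A b /\ forall c, eigenvalue A c -> b <= c.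
End Defs.

(* Main.v *)
Require Import Defs.
From mathcomp Require Import all_boot all_order all_algebra.
From mathcomp Require Import ring.
From mathcomp Require Import ring.
Import Order.TTheory GRing.Theory Num.Theory.
Local Open Scope ring_scope.
Local Open Scope sesquilinear_scope.

Lemma adjM (C : numClosedFieldType) m n p (A : 'M[C]_(m,n)) (B : 'M[C]_(n,p)) :
  (A *m B)^t* = B^t* *m A^t*.
Proof. by rewrite trmx_mul map_mxM. Qed.

Lemma adjB (C : numClosedFieldType) m n (A B : 'M[C]_(m,n)) :
  (A - B)^t* = A^t* - B^t*.
Proof. by apply/matrixP => i j; rewrite !mxE rmorphB. Qed.

Lemma adjZ (C : numClosedFieldType) m n (k : C) (A : 'M[C]_(m,n)) :
  (k *: A)^t* = k^* *: A^t*.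
Proof. by apply/matrixP => i j; rewrite !mxE rmorphM. Qed.

Lemma coordE (C : numClosedFieldType) n (P : 'M[C]_n) (D : 'rV[C]_n) (u w : 'rV[C]_n) :
  P^t* *m P = 1%:M ->
  (u *m (P^t* *m diag_mx D *m P) *m w^t*) 0 0 =
  \sum_i D 0 i * ((u *m P^t*) 0 i * ((w *m P^t*) 0 i)^*).
Proof.
move=> PP.
have -> : u *m (P^t* *m diag_mx D *m P) *m w^t* = (u *m P^t*) *m diag_mx D *m (w *m P^t*)^t*.
  by rewrite adjM trmxCK !mulmxA.
rewrite mxE; apply: eq_bigr => i _; rewrite mul_mx_diag !mxE.
by rewrite -mulrA mulrCA.
Qed.

Lemma coord1 (C : numClosedFieldType) n (P : 'M[C]_n) (u w : 'rV[C]_n) :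
  P^t* *m P = 1%:M ->
  (u *m w^t*) 0 0 = \sum_i (u *m P^t*) 0 i * ((w *m P^t*) 0 i)^*.
Proof.
move=> PP.
have -> : u *m w^t* = (u *m P^t*) *m (w *m P^t*)^t*.
  by rewrite adjM trmxCK -mulmxA (mulmxA _ P) PP mul1mx.
by rewrite mxE; apply: eq_bigr => i _; rewrite !mxE.
Qed.

Lemma kant (C : numClosedFieldType) n (d X Y : 'I_n -> C) (a b : C) :
  0 < b -> b <= a -> (forall i, b <= d i <= a) ->
  \sum_i X i * (Y i)^* = \sum_i Y i * (Y i)^* ->
  \sum_i d i * (Y i * (Y i)^*) <= (a+b)^+2/(4*a*b) * \sum_i d i * (X i * (X i)^*).
Proof.
move=> b0 ba hd hs.
have a0 : 0 < a by apply: (lt_le_trans b0 ba).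
have dpos i : 0 < d i by case/andP: (hd i) => h _; apply: (lt_le_trans b0 h).
have dn0 i : d i != 0 by rewrite gt_eqF.
have dreal i : d i \is Num.real by apply: gtr0_real.
have k0 : 0 <= (a+b)^+2/(4*a*b).
  by rewrite divr_ge0 ?exprn_ge0 ?addr_ge0 ?ltW // !mulr_gt0 // ltr0n.
set c := fun i => Y i * (Y i)^*.
set e := fun i => X i * (X i)^*.
have c0 i : 0 <= c i by apply: mul_conjC_ge0.
have e0 i : 0 <= e i by apply: mul_conjC_ge0.
have r0 : 0 <= \sum_i d i * e i by apply: sumr_ge0 => i _; exact: mulr_ge0 (ltW (dpos i)) (e0 i).
set s := \sum_i c i.
have s0 : 0 <= s by apply: sumr_ge0.
case: (eqVneq s 0) => [sz|snz].
  have ci i : c i = 0 by apply: (psumr_eq0P (fun i _ => c0 i) sz).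
  rewrite big1; first by rewrite mulr_ge0.
  by move=> i _; rewrite /= -/(c i) ci mulr0.
have spos : 0 < s by rewrite lt_def snz s0.
change (\sum_i d i * c i <= (a+b)^+2/(4*a*b) * \sum_i d i * e i).
set p := \sum_i d i * c i.
set r := \sum_i d i * e i.
set q := \sum_i c i / d i.
have p0 : 0 <= p by apply: sumr_ge0 => i _; exact: mulr_ge0 (ltW (dpos i)) (c0 i).
have q0 : 0 <= q by apply: sumr_ge0 => i _; exact: divr_ge0 (c0 i) (ltW (dpos i)).
have aqs : s <= a * q.
  rewrite -subr_ge0 /q /s mulr_sumr -sumrB; apply: sumr_ge0 => i _.
  have -> : a * (c i / d i) - c i = c i * (a - d i) / d i by field.
  apply: divr_ge0; last exact: ltW (dpos i). apply: mulr_ge0 (c0 i) _.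
  by rewrite subr_ge0; case/andP: (hd i).
have qpos : 0 < q by rewrite -(pmulr_rgt0 _ a0); apply: lt_le_trans aqs.
have kant : p + a * b * q <= (a + b) * s.
  rewrite -subr_ge0.
  have -> : (a + b) * s - (p + a * b * q) = \sum_i c i * (a - d i) * (d i - b) / d i.
    rewrite opprD addrA /p /q /s !mulr_sumr -!sumrB; apply: eq_bigr => i _; field; exact: dn0.
  apply: sumr_ge0 => i _; case/andP: (hd i) => h1 h2.
  apply: divr_ge0; last exact: ltW (dpos i). apply: mulr_ge0; first apply: mulr_ge0 (c0 i) _.
    by rewrite subr_ge0.
  by rewrite subr_ge0.
set sig := \sum_i X i * (Y i)^*.
have sigC : \sum_i Y i * (X i)^* = s.
  have -> : \sum_i Y i * (X i)^* = sig^*.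
    rewrite /sig rmorph_sum; apply: eq_bigr => i _.
    by rewrite rmorphM /= conjCK mulrC.
  by rewrite /sig hs; apply: conj_Creal; apply: ger0_real; exact: s0.
have sreal : s^* = s by rewrite conj_Creal // ger0_real.
have qreal : q^* = q by rewrite conj_Creal // ger0_real.
have cs : s ^+ 2 <= q * r.
  set w := fun i => q * X i - s * Y i / d i.
  have : 0 <= \sum_i d i * (w i * (w i)^*).
    by apply: sumr_ge0 => i _; rewrite mulr_ge0 ?mul_conjC_ge0 ?ltW.
  have -> : \sum_i d i * (w i * (w i)^*) = \sum_i (q ^+ 2 * (d i * e i) - q * s * (X i * (Y i)^*)
       - q * s * (Y i * (X i)^*) + s ^+ 2 * (c i / d i)).
    apply: eq_bigr => i _.
    rewrite /w /e /c rmorphB !rmorphM /= fmorphV /= qreal sreal (conj_Creal (dreal i)).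
    field; exact: dn0.
  rewrite big_split /= !sumrB -!mulr_sumr -/r -/q.
  have -> : \sum_i X i * (Y i)^* = s by exact: hs.
  rewrite sigC.
  have -> : q ^+ 2 * r - q * s * s - q * s * s + s ^+ 2 * q = q * (q * r - s ^+ 2) by ring.
  by rewrite pmulr_rge0 // subr_ge0.
set t := p + a * b * q.
have t0 : 0 <= t by rewrite addr_ge0 // mulr_ge0 // mulr_ge0 // ltW.
have h1 : 4 * a * b * q * p <= t ^+ 2.
  rewrite -subr_ge0.
  have -> : t ^+ 2 - 4 * a * b * q * p = (p - a * b * q) * (p - a * b * q)^*.
    rewrite conj_Creal; first by rewrite /t; ring.
    by rewrite realB ?ger0_real // mulr_ge0 // mulr_ge0 // ltW.
  exact: mul_conjC_ge0.
have h2 : t ^+ 2 <= ((a + b) * s) ^+ 2.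
  by rewrite !expr2 ler_pM.
have h3 : ((a + b) * s) ^+ 2 <= (a + b) ^+ 2 * (q * r).
  by rewrite exprMn ler_pM2l // exprn_gt0 // addr_gt0.
have ab0 : 0 < 4 * a * b * q by rewrite !mulr_gt0 // ltr0n.
rewrite -(ler_pM2l ab0).
apply: (le_trans h1); apply: (le_trans h2); apply: (le_trans h3).
rewrite le_eqVlt; apply/orP; left; apply/eqP.
field.
by rewrite !gt_eqF.
Qed.

Theorem corollary1p6 (C : numClosedFieldType) (n : nat) (Z E : 'M[C]_n) (a b : C) :
  pdmx Z -> largest_eigenvalue Z a -> smallest_eigenvalue Z b ->
  orth_projmx E ->
  loewner_le (E *m Z *m E) (((a + b) ^+ 2 / (4 * a * b)) *: Z).
Proof.
move=> [Zh Zpos] [ea amax] [eb bmin] [Eh EE].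
change (Z^t* = Z) in Zh; change (E^t* = E) in Eh.
have Znormal : Z \is normalmx by apply/normalmxP; rewrite Zh.
set P := spectralmx Z; set D := spectral_diag Z.
have Pu : P \is unitarymx := spectral_unitarymx Z.
have ZPD : Z = P^t* *m diag_mx D *m P.
  by rewrite -(invmx_unitary Pu); apply/orthomx_spectralP.
have PP : P^t* *m P = 1%:M by rewrite -(invmx_unitary Pu) mulVmx // spectral_unit.
have PP' : P *m P^t* = 1%:M by apply/unitarymxP.
have Deig i : eigenvalue Z (D 0 i).
  apply/eigenvalueP; exists (delta_mx 0 i *m P).
    rewrite ZPD !mulmxA -(mulmxA _ P) PP' mulmx1.
    have -> : (delta_mx 0 i : 'rV[C]_n) *m diag_mx D = D 0 i *: delta_mx 0 i.
      apply/matrixP => j l; rewrite mul_mx_diag !mxE.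
      by case: (eqVneq l i) => [->|_]; rewrite ?andbF ?mul0r ?mulr0 // mulrC.
    by rewrite -scalemxAl.
  apply/eqP => h; have := congr1 (fun M => M *m P^t*) h.
  rewrite -mulmxA PP' mulmx1 mul0mx => /matrixP/(_ 0 i); rewrite !mxE !eqxx /=.
  by move/eqP; rewrite oner_eq0.
have b0 : 0 < b.
  case/eigenvalueP: eb => v vb vn0; have := Zpos v vn0.
  rewrite /qform vb -scalemxAl mxE.
  have N0 : 0 <= (v *m v^t*) 0 0.
    by rewrite mxE; apply: sumr_ge0 => j _; rewrite !mxE; exact: mul_conjC_ge0.
  move=> h.
  have Npos : 0 < (v *m v^t*) 0 0.
    rewrite lt_def N0 andbT; apply: contraTneq h => ->; by rewrite mulr0 ltxx.
  by rewrite -(pmulr_lgt0 _ Npos).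
have ba : b <= a := amax b eb.
have hd i : b <= D 0 i <= a by rewrite bmin ?amax.
have a0 : 0 < a by apply: (lt_le_trans b0 ba).
set k := (a + b) ^+ 2 / (4 * a * b).
have kreal : k^* = k.
  apply: conj_Creal; apply: gtr0_real.
  by rewrite /k divr_gt0 ?exprn_gt0 ?addr_gt0 // !mulr_gt0 // ltr0n.
split.
  change ((k *: Z - E *m Z *m E)^t* = k *: Z - E *m Z *m E).
  rewrite adjB adjZ !adjM Zh Eh kreal.
  by rewrite mulmxA.
move=> v.
have -> : qform (k *: Z - E *m Z *m E) v =
   k * (v *m Z *m v^t*) 0 0 - ((v *m E) *m Z *m (v *m E)^t*) 0 0.
  rewrite /qform adjM Eh mulmxBr mulmxBl -scalemxAr -scalemxAl !mulmxA.
  by rewrite !mxE.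
rewrite subr_ge0 ZPD !coordE //.
apply: (@kant C n (fun i => D 0 i) (fun i => (v *m P^t*) 0 i)
   (fun i => (v *m E *m P^t*) 0 i) a b b0 ba hd).
rewrite -!coord1 // adjM Eh !mulmxA -(mulmxA v E E) EE.
done.
Qed.
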